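(* Under the assumptions of the preceding lemma (two homomorphous MDPs with deterministic dynamics $T,T'$, $T'\in(T,\varepsilon_m)$, reward $\lambda_1$-Lipschitz in the action, $T$ and $T'$ $\lambda_2$-inverse Lipschitz in the action), suppose the action gap $\Delta$ satisfies $$\Delta>\frac{(2-\gamma)\lambda_1\lambda_2\varepsilon_m}{1-\gamma}.$$ Then $d^*_T(s)=d^*_{T'}(s)$ for all $s\in\mathcal S$.
   Context: Setting: An MDP has state space $\mathcal S$ (normed), action space $\mathcal A$ with the $\ell_1$ norm, deterministic dynamics $T:\mathcal S\times\mathcal A\to\mathcal S$, bounded reward $r(s,a,s')$, initial distribution $\rho_0$, discount $\gamma\in(0,1)$. $V^*_T(s)=\max_a[r(s,a,T(s,a))+\gamma V^*_T(T(s,a))]$, $Q^*_T(s,a)=r(s,a,T(s,a))+\gamma V^*_T(T(s,a))$, and $\pi^*_T(s)$ is the optimal (deterministic) action. Homomorphous MDPs share $\mathcal S,\mathcal A,r,\rho_0,\gamma$ and satisfy $\{T(s,a):a\in\mathcal A\}=\{T'(s,a):a\in\mathcal A\}$ for every $s$. $T'\in(T,\varepsilon_m)$ means $\|T(s,a)-T'(s,a)\|\le\varepsilon_m$ for all $(s,a)$. Lipschitz: $|r(s,a_1,s')-r(s,a_2,s')|\le\lambda_1\|a_1-a_2\|_1$; inverse Lipschitz: $\|a_1-a_2\|_1\le\lambda_2\|T(s,a_1)-T(s,a_2)\|$ (and likewise for $T'$). The action gap is $\Delta=\min_{\tilde T\in\{T,T'\}}\min_{s\in\mathcal S}\min_{a\neq\pi^*_{\tilde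 T}(s)}\left(V^*_{\tilde T}(s)-Q^*_{\tilde T}(s,a)\right)$. For a policy $\pi$, $d^\pi_T(s)=(1-\gamma)\sum_{t\ge0}\gamma^t p_T(s_t=s\mid\pi)$ is the discounted stationary state distribution under dynamics $T$ starting from $s_0\sim\rho_0$, and $d^*_T:=d^{\pi^*_T}_T$. *)

(* Defs.v *)
From HB Require Import structures.
From mathcomp Require Import all_boot all_order all_algebra.
From mathcomp Require Import all_classical all_reals all_analysis.
Set Implicit Arguments. Unset Strict Implicit. Unset Printing Implicit Defensive.
Import Order.TTheory GRing.Theory Num.Theory.
Import numFieldNormedType.Exports.
Local Open Scope classical_set_scope.
Local Open Scope ring_scope.

Section MDP.
Variables (R : realType) (k : nat) (S : normedModType R).

Definition l1norm (a : 'rV[R]_k) : R := \sum_(i < k) `|a ord0 i|.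

Definition borelS := g_sigma_algebraType (@open S).

Definition Qval (gamma : R) (r : S -> 'rV[R]_k -> S -> R)
  (T : S -> 'rV[R]_k -> S) (V : S -> R) (s : S) (a : 'rV[R]_k) : R :=
  r s a (T s a) + gamma * V (T s a).

(* V is V*_T : the bounded solution of the Bellman optimality equation
   V(s) = max_{a in A} [ r(s,a,T(s,a)) + gamma V(T(s,a)) ] (max attained) *)
Definition is_opt_value (A : set 'rV[R]_k) gamma r T (V : S -> R) : Prop :=
  (exists M : R, forall s, `|V s| <= M) /\
  forall s, (exists2 a, A a & V s = Qval gamma r T V s a) /\
            (forall a, A a -> Qval gamma r T V s a <= V s).

Definition is_opt_policy (A : set 'rV[R]_k) gamma r T V (pi : S -> 'rV[R]_k)
  : Prop := forall s, A (pi s) /\ Qval gamma r T V s (pi s) = V s.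

Definition gap_set (A : set 'rV[R]_k) gamma r T V (pi : S -> 'rV[R]_k)
  : set (\bar R) :=
  [set x | exists s a, [/\ A a, a <> pi s & x = (V s - Qval gamma r T V s a)%:E]].

(* action gap Delta over both MDPs (T,V,pi) and (T',V',pi'), as an
   extended-real infimum (the "min" of the paper; +oo if the set is empty) *)
Definition action_gap (A : set 'rV[R]_k) gamma r T V pi T' V' pi' : \bar R :=
  ereal_inf (gap_set A gamma r T V pi `|` gap_set A gamma r T' V' pi').

Definition step (T : S -> 'rV[R]_k -> S) (pi : S -> 'rV[R]_k) (s : S) : S :=
  T s (pi s).

Definition dstat (rho0 : probability (borelS) R) gamma T pi (s : S) : \bar R :=
  (\sum_(t <oo) (((1 - gamma) * gamma ^+ t)%:E *
     rho0 [set s0 : borelS | iter t (step T pi) s0 = s]))%E.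

End MDP.

(* Main.v *)
Require Import Defs.
From HB Require Import structures.
From mathcomp Require Import all_boot all_order all_algebra.
From mathcomp Require Import all_classical all_reals all_analysis.
Import Order.TTheory GRing.Theory Num.Theory.
Import numFieldNormedType.Exports.
Local Open Scope classical_set_scope.
Local Open Scope ring_scope.

From mathcomp Require Import ring lra.

Lemma l1norm_pos (R : realType) (k : nat) (v : 'rV[R]_k) :
  v != 0 -> 0 < l1norm v.
Proof.
move=> nv; rewrite lt_def; apply/andP; split; last by apply: sumr_ge0 => i _; exact: normr_ge0.
apply/negP => /eqP H; move/negP: nv; apply; apply/eqP/matrixP => i j.
rewrite (ord1 i) mxE; apply/eqP; rewrite -normr_eq0; apply/eqP.
by apply: (psumr_eq0P (fun i _ => normr_ge0 _) H).
Qed.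

Lemma lerM2h {R : realType} {x y z : R} : 0 <= x -> y <= z -> x * y <= x * z.
Proof. by move=> h1 h2; rewrite ler_wpM2l. Qed.

Theorem mainTheorem2 (R : realType) (k : nat) (S : normedModType R)
  (A : set 'rV[R]_k) (r : S -> 'rV[R]_k -> S -> R)
  (rho0 : probability (borelS S) R) (gamma : R)
  (T T' : S -> 'rV[R]_k -> S) (eps_m lambda1 lambda2 : R)
  (V V' : S -> R) (pi pi' : S -> 'rV[R]_k) :
  0 < gamma < 1 ->
  (exists M : R, forall s a s', `|r s a s'| <= M) ->
  (* homomorphous *)
  (forall s, T s @` A = T' s @` A) ->
  (* T' in (T, eps_m) *)
  (forall s a, A a -> `|T s a - T' s a| <= eps_m) ->
  (* reward lambda1-Lipschitz in the action *)
  (forall s a1 a2 s', A a1 -> A a2 ->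
     `|r s a1 s' - r s a2 s'| <= lambda1 * l1norm (a1 - a2)) ->
  (* T and T' lambda2-inverse Lipschitz in the action *)
  (forall s a1 a2, A a1 -> A a2 ->
     l1norm (a1 - a2) <= lambda2 * `|T s a1 - T s a2|) ->
  (forall s a1 a2, A a1 -> A a2 ->
     l1norm (a1 - a2) <= lambda2 * `|T' s a1 - T' s a2|) ->
  (* optimal values and optimal policies *)
  is_opt_value A gamma r T V -> is_opt_policy A gamma r T V pi ->
  is_opt_value A gamma r T' V' -> is_opt_policy A gamma r T' V' pi' ->
  (* action gap condition *)
  (((2 - gamma) * lambda1 * lambda2 * eps_m / (1 - gamma))%:E
     < action_gap A gamma r T V pi T' V' pi')%E ->
  forall s : S, dstat rho0 gamma T pi s = dstat rho0 gamma T' pi' s.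
Proof.
move=> /andP[g0 g1] _ Hhom Heps Hlip Hinv Hinv' [[M HM] HV] Hpi [[M' HM'] HV'] Hpi' Hgap.
suff Hstep : step T pi = step T' pi' by move=> s; rewrite /dstat Hstep.
have match1 : forall s a, A a -> exists2 b, A b & T' s b = T s a.
  move=> s a Aa; have : (T' s @` A) (T s a) by rewrite -Hhom; exists a.
  by case=> b Ab E; exists b.
have match2 : forall s a, A a -> exists2 b, A b & T s b = T' s a.
  move=> s a Aa; have : (T s @` A) (T' s a) by rewrite Hhom; exists a.
  by case=> b Ab E; exists b.
have [[a0 [b0 [Aa0 Ab0 nab]]] | sub] :=
  pselect (exists a b, [/\ A a, A b & a <> b]); last first.
  have eqA : forall a b, A a -> A b -> a = b.
    move=> a b Aa Ab; case: (pselect (a = b)) => // ne; exfalso; apply: sub.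
    by exists a, b.
  apply: funext => s; rewrite /step.
  have [b Ab Eb] := match2 s (pi' s) (Hpi' s).1.
  by rewrite -(eqA _ _ Ab (Hpi s).1) Eb.
have hab : 0 < l1norm (a0 - b0) by apply: l1norm_pos; rewrite subr_eq0; apply/eqP.
have l2ge0 : 0 <= lambda2.
  rewrite leNgt; apply/negP => l2neg.
  have := Hinv 0 a0 b0 Aa0 Ab0.
  have := mulr_le0_ge0 (ltW l2neg) (normr_ge0 (T 0 a0 - T 0 b0)).
  lra.
have l1ge0 : 0 <= lambda1.
  rewrite -(pmulr_lge0 _ hab).
  exact: le_trans (normr_ge0 _) (Hlip 0 a0 b0 0 Aa0 Ab0).
have ege0 : 0 <= eps_m := le_trans (normr_ge0 _) (Heps 0 a0 Aa0).
have Heps' : forall s a, A a -> `|T' s a - T s a| <= eps_m.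
  by move=> s a Aa; rewrite distrC; exact: Heps.
set c := lambda1 * lambda2 * eps_m.
have cge0 : 0 <= c by rewrite /c !mulr_ge0.
have rd : forall (T1 T2 : S -> 'rV[R]_k -> S) s a b,
    (forall s a1 a2, A a1 -> A a2 ->
       l1norm (a1 - a2) <= lambda2 * `|T1 s a1 - T1 s a2|) ->
    A a -> A b -> T1 s a = T2 s b -> `|T1 s b - T2 s b| <= eps_m ->
    r s a (T1 s a) - r s b (T1 s a) <= c.
  move=> T1 T2 s a b Hi Aa Ab E Hb.
  apply: le_trans (ler_norm _) _; apply: le_trans (Hlip _ _ _ _ Aa Ab) _.
  rewrite /c -!mulrA; apply: lerM2h => //.
  apply: (le_trans (Hi s _ _ Aa Ab)); apply: lerM2h => //.
  by rewrite E distrC.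
set K := c / (1 - gamma).
have Kge0 : 0 <= K by rewrite /K divr_ge0 // subr_ge0 ltW.
have thrE : (2 - gamma) * lambda1 * lambda2 * eps_m / (1 - gamma) = K + c.
  rewrite /K /c; field; lra.
rewrite thrE in Hgap.
have gapT : forall s a, A a -> a <> pi s -> K + c < V s - Qval gamma r T V s a.
  move=> s a Aa na; rewrite -lte_fin; apply: lt_le_trans Hgap _.
  by apply: ereal_inf_lbound; left; exists s, a; split.
have gapT' : forall s a, A a -> a <> pi' s -> K + c < V' s - Qval gamma r T' V' s a.
  move=> s a Aa na; rewrite -lte_fin; apply: lt_le_trans Hgap _.
  by apply: ereal_inf_lbound; right; exists s, a; split.
set E := range (fun s => `|V s - V' s|).
have hubE : has_ubound E.
  exists (M + M') => _ [s _ <-].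
  apply: le_trans (ler_normB _ _) _; exact: lerD.
have neE : E !=set0 by exists `|V 0 - V' 0|, 0.
set D := sup E.
have Dub : forall z, `|V z - V' z| <= D.
  by move=> z; apply: (ub_le_sup hubE); exists z.
have Dub1 : forall z, gamma * (V z - V' z) <= gamma * D.
  by move=> z; apply: lerM2h (ltW g0) (le_trans (ler_norm _) (Dub z)).
have Dub2 : forall z, gamma * (V' z - V z) <= gamma * D.
  by move=> z; apply: lerM2h (ltW g0) (le_trans (ler_norm _) _); rewrite distrC.
have bd1 : forall s, V s - V' s <= c + gamma * D.
  move=> s; have [Aa Qa] := Hpi s; have [b Ab Eb] := match1 s (pi s) Aa.
  have Vb := (HV' s).2 b Ab; rewrite /Qval Eb in Vb; rewrite -Qa /Qval.
  have := rd T T' s (pi s) b Hinv Aa Ab (esym Eb) (Heps s b Ab).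
  have := Dub1 (T s (pi s)).
  lra.
have bd2 : forall s, V' s - V s <= c + gamma * D.
  move=> s; have [Aa Qa] := Hpi' s; have [b Ab Eb] := match2 s (pi' s) Aa.
  have Vb := (HV s).2 b Ab; rewrite /Qval Eb in Vb; rewrite -Qa /Qval.
  have := rd T' T s (pi' s) b Hinv' Aa Ab (esym Eb) (Heps' s b Ab).
  have := Dub2 (T' s (pi' s)).
  lra.
have hD : D <= K.
  have : D <= c + gamma * D.
    apply: (ge_sup neE) => _ [z _ <-]; rewrite ler_norml.
    by have := bd1 z; have := bd2 z; lra.
  move=> h; rewrite /K ler_pdivlMr ?subr_gt0 //; lra.
have gK : gamma * D <= K.
  apply: le_trans (lerM2h (ltW g0) hD) _.
  rewrite -subr_ge0 -{1}(mul1r K) -mulrBl; apply: mulr_ge0 => //; lra.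
apply: funext => s; rewrite /step.
case: (pselect (T s (pi s) = T' s (pi' s))) => // ne; exfalso.
have [Aa Qa] := Hpi s; have [Ab' Qb'] := Hpi' s.
have [b1 Ab1 Eb1] := match1 s (pi s) Aa.
have [a2 Aa2 Ea2] := match2 s (pi' s) Ab'.
have na2 : a2 <> pi s by move=> E2; apply: ne; rewrite -E2.
have nb1 : b1 <> pi' s by move=> E1; apply: ne; rewrite -Eb1 E1.
have G1 := gapT s a2 Aa2 na2; have G2 := gapT' s b1 Ab1 nb1.
rewrite /Qval Ea2 in G1; rewrite /Qval Eb1 in G2.
rewrite -Qa /Qval in G1; rewrite -Qb' /Qval in G2.
have := rd T T' s (pi s) b1 Hinv Aa Ab1 (esym Eb1) (Heps s b1 Ab1).
have := rd T' T s (pi' s) a2 Hinv' Ab' Aa2 (esym Ea2) (Heps' s a2 Aa2).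
have := Dub1 (T s (pi s)); have := Dub2 (T' s (pi' s)).
lra.
Qed.
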